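(* Let $\mathcal M$ be a left $\mathcal A$-module and $N$ an $R$-submodule of $\mathcal M$. Then for every choice of $\vartheta$, \[ I_N = N\cap\sigma_\vartheta(N)=N\cap\tau_\vartheta(N). \] In particular, $N\cap\sigma_\vartheta(N)$ and $N\cap\tau_\vartheta(N)$ are $\mathcal A$-submodules of $\mathcal M$.
   Context: $R$ is a unital commutative ring and $\mathcal A$ an associative unital (not necessarily commutative) $R$-algebra. The symbol $\vartheta$ ranges over the four options ''left'', ''right'', ''pre-two-sided'', ''two-sided''. An $R$-submodule $J\subseteq\mathcal A$ is a left (resp. right; two-sided) Mathieu subspace of $\mathcal A$ if whenever $a\in\mathcal A$ satisfies $a^m\in J$ for all $m\ge1$, then for all $b,c\in\mathcal A$ there is $N_0\ge1$ with $ba^m\in J$ (resp. $a^mc\in J$; $ba^mc\in J$) for all $m\ge N_0$; it is a pre-two-sided Mathieu subspace if it is both a left and a right Mathieu subspace. A $\vartheta$-ideal means a left (resp. right; two-sided) ideal for $\vartheta$ = left (resp. right; two-sided), and a two-sided ideal for $\vartheta$ = pre-two-sided. All modules are left modules. For a left $\mathcal A$-module $\mathcal M$, $u\in\mathcal M$ and a subset $N\subseteq\mathcal M$, put $(N:u)=\{a\in\mathcal A: au\in N\}$. For an $R$-submodule $N$ of $\mathcal M$, $\sigma_\vartheta(N)$ is the set of $u\in\mathcal M$ such that $(N:u)$ is a $\vartheta$-ideal of $\mathcal A$, and $\tau_\vartheta(N)$ is the set of $u\in\mathcal M$ such that $(N:u)$ is a $\vartheta$-Mathieu subspace of $\mathcal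 A$. $I_N$ denotes the largest $\mathcal A$-submodule of $\mathcal M$ contained in $N$ (the sum of all $\mathcal A$-submodules of $\mathcal M$ contained in $N$). *)

(* Defs.v *)
From HB Require Import structures.
From mathcomp Require Import all_boot all_order all_algebra.
Set Implicit Arguments. Unset Strict Implicit. Unset Printing Implicit Defensive.
Import GRing.Theory.
Local Open Scope ring_scope.

Inductive theta := Left | Right | PreTwoSided | TwoSided.

Section Defs.
Variables (R : comPzRingType) (A : algType R) (M : lmodType A).

Definition is_Rsubmod (N : M -> Prop) : Prop :=
  [/\ N 0, (forall u v, N u -> N v -> N (u + v)) &
      (forall (r : R) u, N u -> N ((r *: (1 : A)) *: u))].

Definition is_Rsubspace (J : A -> Prop) : Prop :=
  [/\ J 0, (forall a b, J a -> J b -> J (a + b)) &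
      (forall (r : R) a, J a -> J (r *: a))].

Definition is_Asubmod (P : M -> Prop) : Prop :=
  [/\ P 0, (forall u v, P u -> P v -> P (u + v)) &
      (forall (a : A) u, P u -> P (a *: u))].

Definition is_left_ideal (J : A -> Prop) : Prop :=
  [/\ J 0, (forall a b, J a -> J b -> J (a + b)) &
      (forall c a, J a -> J (c * a))].

Definition is_right_ideal (J : A -> Prop) : Prop :=
  [/\ J 0, (forall a b, J a -> J b -> J (a + b)) &
      (forall c a, J a -> J (a * c))].

Definition is_twosided_ideal (J : A -> Prop) : Prop :=
  is_left_ideal J /\ is_right_ideal J.

Definition is_theta_ideal (th : theta) (J : A -> Prop) : Prop :=
  match th with
  | Left => is_left_ideal J
  | Right => is_right_ideal J
  | PreTwoSided | TwoSided => is_twosided_ideal J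
  end.

Definition all_powers_in (J : A -> Prop) (a : A) : Prop :=
  forall m : nat, (1 <= m)%N -> J (a ^+ m).

Definition is_left_MS (J : A -> Prop) : Prop :=
  is_Rsubspace J /\
  forall a, all_powers_in J a -> forall b c : A,
    exists N0 : nat, (1 <= N0)%N /\ forall m : nat, (N0 <= m)%N -> J (b * a ^+ m).

Definition is_right_MS (J : A -> Prop) : Prop :=
  is_Rsubspace J /\
  forall a, all_powers_in J a -> forall b c : A,
    exists N0 : nat, (1 <= N0)%N /\ forall m : nat, (N0 <= m)%N -> J (a ^+ m * c).

Definition is_twosided_MS (J : A -> Prop) : Prop :=
  is_Rsubspace J /\
  forall a, all_powers_in J a -> forall b c : A,
    exists N0 : nat, (1 <= N0)%N /\ forall m : nat, (N0 <= m)%N -> J (b * a ^+ m * c).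

Definition is_pretwosided_MS (J : A -> Prop) : Prop :=
  is_left_MS J /\ is_right_MS J.

Definition is_theta_MS (th : theta) (J : A -> Prop) : Prop :=
  match th with
  | Left => is_left_MS J
  | Right => is_right_MS J
  | PreTwoSided => is_pretwosided_MS J
  | TwoSided => is_twosided_MS J
  end.

Definition colon (N : M -> Prop) (u : M) : A -> Prop := fun a => N (a *: u).

Definition sigma_th (th : theta) (N : M -> Prop) : M -> Prop :=
  fun u => is_theta_ideal th (colon N u).

Definition tau_th (th : theta) (N : M -> Prop) : M -> Prop :=
  fun u => is_theta_MS th (colon N u).

(* I_N: the sum of all A-submodules of M contained in N, i.e. the smallest
   A-submodule containing every A-submodule P contained in N. *)
Definition I_N (N : M -> Prop) : M -> Prop :=
  fun u => forall Q : M -> Prop, is_Asubmod Q ->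
    (forall P : M -> Prop, is_Asubmod P -> (forall v, P v -> N v) ->
       forall v, P v -> Q v) -> Q u.

End Defs.

(* Main.v *)
Require Import Defs.
From mathcomp Require Import all_boot all_order all_algebra.
Import GRing.Theory.
Local Open Scope ring_scope.

Section S.
Variables (R : comPzRingType) (A : algType R) (M : lmodType A).
Variable (N : M -> Prop).
Hypothesis hN : is_Rsubmod N.

Definition full (u : M) := forall a : A, N (a *: u).

Lemma full_sub : is_Asubmod full.
Proof.
case: hN => h0 hD hZ; split.
- by move=> a; rewrite scaler0.
- by move=> u v hu hv a; rewrite scalerDr; apply: hD.
- by move=> a u hu b; rewrite scalerA.
Qed.

Lemma IN_full u : I_N N u <-> full u.
Proof.
split.
- move=> H; apply: H; first exact: full_sub.
  move=> P [P0 PD PZ] PN v Pv a; apply: PN; exact: PZ.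
- move=> fu Q hQ HQ; apply: (HQ full full_sub) => //.
  by move=> v fv; have := fv 1; rewrite scale1r.
Qed.

Lemma full_N u : full u -> N u.
Proof. by move=> fu; have := fu 1; rewrite scale1r. Qed.

Lemma sigma_full th u : N u /\ sigma_th th N u <-> full u.
Proof.
split.
- move=> [Nu]; rewrite /sigma_th /colon.
  have N1 : N (1 *: u) by rewrite scale1r.
  case: th => /=.
  + by move=> [_ _ H] a; have := H a 1 N1; rewrite mulr1.
  + by move=> [_ _ H] a; have := H a 1 N1; rewrite mul1r.
  + by move=> [[_ _ H] _] a; have := H a 1 N1; rewrite mulr1.
  + by move=> [[_ _ H] _] a; have := H a 1 N1; rewrite mulr1.
- move=> fu; split; first exact: full_N.
  have hl : is_left_ideal (colon N u) by split => *; apply: fu.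
  have hr : is_right_ideal (colon N u) by split => *; apply: fu.
  by case: th => //=.
Qed.

Lemma tau_full th u : N u /\ tau_th th N u <-> full u.
Proof.
have hp : all_powers_in (colon N u) 1 -> True by [].
split.
- move=> [Nu]; rewrite /tau_th.
  have P1 : N u -> all_powers_in (colon N u) 1.
    by move=> Nu' m _; rewrite /colon expr1n scale1r.
  case: th => /=.
  + move=> [_ H] a; have [N0 [_ HN]] := H 1 (P1 Nu) a a.
    by have := HN N0 (leqnn _); rewrite expr1n mulr1.
  + move=> [_ H] a; have [N0 [_ HN]] := H 1 (P1 Nu) a a.
    by have := HN N0 (leqnn _); rewrite expr1n mul1r.
  + move=> [[_ H] _] a; have [N0 [_ HN]] := H 1 (P1 Nu) a a.
    by have := HN N0 (leqnn _); rewrite expr1n mulr1.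
  + move=> [_ H] a; have [N0 [_ HN]] := H 1 (P1 Nu) a 1.
    by have := HN N0 (leqnn _); rewrite expr1n !mulr1.
- move=> fu; split; first exact: full_N.
  have hs : is_Rsubspace (colon N u) by split => *; apply: fu.
  have hl : is_left_MS (colon N u) by split => // *; exists 1%N; split => // *; apply: fu.
  have hr : is_right_MS (colon N u) by split => // *; exists 1%N; split => // *; apply: fu.
  have ht : is_twosided_MS (colon N u) by split => // *; exists 1%N; split => // *; apply: fu.
  by case: th => //=.
Qed.

End S.

Theorem theorem3p11 (R : comPzRingType) (A : algType R) (M : lmodType A)
  (N : M -> Prop) (hN : is_Rsubmod N) (th : theta) :
  (forall u, I_N N u <-> (N u /\ sigma_th th N u)) /\
  (forall u, I_N N u <-> (N u /\ tau_th th N u)) /\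
  is_Asubmod (fun u => N u /\ sigma_th th N u) /\
  is_Asubmod (fun u => N u /\ tau_th th N u).
Proof.
have F := @full_sub R A M N hN.
split; [|split; [|split]].
- by move=> u; apply: (iff_trans (@IN_full R A M N hN u)); apply: iff_sym; exact: (@sigma_full R A M N th u).
- by move=> u; apply: (iff_trans (@IN_full R A M N hN u)); apply: iff_sym; exact: (@tau_full R A M N th u).
- case: F => F0 FD FZ; split.
  + by apply/sigma_full.
  + by move=> u v /sigma_full hu /sigma_full hv; apply/sigma_full; apply: FD.
  + by move=> a u /sigma_full hu; apply/sigma_full; apply: FZ.
- case: F => F0 FD FZ; split.
  + by apply/tau_full.
  + by move=> u v /tau_full hu /tau_full hv; apply/tau_full; apply: FD.
  + by move=> a u /tau_full hu; apply/tau_full; apply: FZ.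
Qed.
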